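(* Suppose $d^{(1)}_{15}<0$, $d^{(1)}_{24}<0$ and $d^{(4)}_{12}<0$. Then every section $\mathcal{A}\in H^0(\bigwedge^2\mathcal{F}\otimes\mathcal{E}\otimes\det\mathcal{E}^\vee)$ is singular above every point $p\in\mathbb{P}^1$ at which $a^{(1)}_{25}$ vanishes. (Consequently, if $C_{\mathcal{A}}$ is a smooth curve then $d^{(1)}_{25}=0$.)
   Context: Work over $\mathbb{C}$. Fix $g\ge0$, $N=g+4$, $\mathcal{E}\cong\bigoplus_{k=1}^4\mathcal{O}_{\mathbb{P}^1}(e_k)$ with $e_1\le\dots\le e_4$, $\sum e_k=N$, and $\mathcal{F}\cong\bigoplus_{i=1}^5\mathcal{O}(f_i)$ with $f_1\le\dots\le f_5$, $\sum f_i=2N$, splittings fixed; $d^{(k)}_{ij}=f_i+f_j+e_k-N$. A section $\mathcal{A}\in H^0(\bigwedge^2\mathcal{F}\otimes\mathcal{E}\otimes\det\mathcal{E}^\vee)$ is a quadruple $(A_1,\dots,A_4)$ of $5\times5$ alternating matrices whose $(i,j)$ entry $a^{(k)}_{ij}$ of $A_k$ is a homogeneous form in $\mathbb{C}[s,t]$ of degree $d^{(k)}_{ij}$ (zero if negative). $C_{\mathcal{A}}\subset\mathbb{P}(\mathcal{E})$ is the subscheme cut out by the five $4\times4$ principal sub-Pfaffians of $\mathcal{A}(\mathbf{x})=\sum_kA_kx_k$ ($x_1,\dots,x_4$ fiber coordinates). $\mathcal{A}$ is singular above $p$ if some point of $C_{\mathcal{A}}$ over $p$ has Zariski tangent space of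 dimension $\ne1$. *)

(* Defs.v *)
From HB Require Import structures.
From mathcomp Require Import all_boot all_order all_algebra.
From mathcomp Require Import mpoly.
Set Implicit Arguments. Unset Strict Implicit. Unset Printing Implicit Defensive.
Import Order.TTheory GRing.Theory Num.Theory.
Local Open Scope ring_scope.

Section Defs.
Variable F : fieldType.

(* degree d^{(k)}_{ij} = f_i + f_j + e_k - N  (indices shifted to start at 0) *)
Definition dgr (N : int) (e : 'I_4 -> int) (f : 'I_5 -> int) (k : 'I_4) (i j : 'I_5)
  : int := f i + f j + e k - N.

(* A section of  /\^2 F (x) E (x) det E^v : quadruple of 5x5 alternating matrices,
   entry (i,j) of A_k a binary form in C[s,t] (variables 'X_0 = s, 'X_1 = t)
   homogeneous of degree d^{(k)}_{ij}, and zero if that degree is negative. *)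
Definition is_section (N : int) (e : 'I_4 -> int) (f : 'I_5 -> int)
  (A : 'I_4 -> 'I_5 -> 'I_5 -> {mpoly F[2]}) : Prop :=
  (forall k i, A k i i = 0) /\
  (forall k i j, A k j i = - A k i j) /\
  (forall k i j, 0 <= dgr N e f k i j -> A k i j \is (absz (dgr N e f k i j)).-homog) /\
  (forall k i j, dgr N e f k i j < 0 -> A k i j = 0).

(* Cox-type coordinates on P(E): variables 'X_0 = s, 'X_1 = t, 'X_(2+k) = x_(k+1). *)
Definition st_var (i : 'I_2) : 'I_6 := widen_ord (isT : (2 <= 6)%N) i.
Definition x_var (k : 'I_4) : 'I_6 := rshift 2 k.

Definition lift26 (p : {mpoly F[2]}) : {mpoly F[6]} :=
  mmap (@mpolyC 6 F) (fun i => 'X_(st_var i)) p.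

Definition Amat (A : 'I_4 -> 'I_5 -> 'I_5 -> {mpoly F[2]}) (i j : 'I_5) : {mpoly F[6]} :=
  \sum_(k < 4) lift26 (A k i j) * 'X_(x_var k).

Definition Pf4 (M : 'I_5 -> 'I_5 -> {mpoly F[6]}) (a b c d : 'I_5) : {mpoly F[6]} :=
  M a b * M c d - M a c * M b d + M a d * M b c.

Definition pfaff (A : 'I_4 -> 'I_5 -> 'I_5 -> {mpoly F[2]}) (i : 'I_5) : {mpoly F[6]} :=
  Pf4 (Amat A) (lift i (inord 0)) (lift i (inord 1)) (lift i (inord 2)) (lift i (inord 3)).

Definition on_curve A (pt : 'I_6 -> F) : Prop := forall i, (pfaff A i).@[pt] = 0.

(* Affine chart of P(E): base coordinate number b set to 1, fiber coordinate x_j set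
   to 1; the remaining 4 coordinates are affine coordinates of the chart.  The
   Jacobian of the local equations (the five Pfaffians) w.r.t. the free coordinates,
   with the two fixed columns zeroed out. *)
Definition free_var (b : 'I_2) (j : 'I_4) (l : 'I_6) : bool :=
  (l != st_var b) && (l != x_var j).

Definition jac A (pt : 'I_6 -> F) (b : 'I_2) (j : 'I_4) : 'M[F]_(5, 6) :=
  \matrix_(i < 5, l < 6) (if free_var b j l then ((pfaff A i)^`M(l)).@[pt] else 0).

(* dimension of the Zariski tangent space of C_A at the point, in the chart (b,j):
   kernel of the Jacobian in the 4-dimensional chart *)
Definition tangent_dim A pt b j : nat := (4 - \rank (jac A pt b j))%N.

Definition mkpt (c : F) (p : 'I_2 -> F) (x : 'I_4 -> F) (l : 'I_6) : F :=
  match split (l : 'I_(2 + 4)) with inl s => c * p s | inr k => x k end.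

Definition singular_above A (p : 'I_2 -> F) : Prop :=
  exists (c : F) (b : 'I_2) (x : 'I_4 -> F) (j : 'I_4),
    c * p b = 1 /\ x j = 1 /\ on_curve A (mkpt c p x) /\
    tangent_dim A (mkpt c p x) b j <> 1%N.

End Defs.

(* Main.v *)
Require Import Defs.
From HB Require Import structures.
From mathcomp Require Import all_boot all_order all_algebra.
From mathcomp Require Import mpoly.
From mathcomp Require Import zify.
Import Order.TTheory GRing.Theory Num.Theory.
Local Open Scope ring_scope.

Lemma ord5_cases (P : 'I_5 -> Prop) :
  P (inord 0) -> P (inord 1) -> P (inord 2) -> P (inord 3) -> P (inord 4) ->
  forall i, P i.
Proof.
move=> H0 H1 H2 H3 H4 [m Hm].
have -> : Ordinal Hm = inord m by apply/val_inj; rewrite /= inordK.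
by case: m Hm => [|[|[|[|[|m]]]]].
Qed.

Lemma bump_lt n k : (n < 5)%N -> (k < 4)%N -> (bump n k < 5)%N.
Proof. by rewrite /bump; case: (n <= k)%N => /=; rewrite ?add1n ?add0n // => _ /ltn_trans; apply. Qed.


Lemma lift_inord n k : (n < 5)%N -> (k < 4)%N ->
  lift (inord n : 'I_5) (inord k : 'I_4) = inord (bump n k).
Proof.
move=> Hn Hk; apply/val_inj; change (bump (inord n : 'I_5) (inord k : 'I_4) = nat_of_ord (inord (bump n k) : 'I_5)).
rewrite (inordK Hn) (inordK Hk) inordK //; exact: bump_lt.
Qed.

Lemma pfaffE (F : fieldType) A n : (n < 5)%N ->
  @pfaff F A (inord n) = Pf4 (Amat A) (inord (bump n 0)) (inord (bump n 1))
     (inord (bump n 2)) (inord (bump n 3)).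
Proof.
by move=> Hn; rewrite /pfaff !lift_inord.
Qed.
Lemma mkpt_st (F : fieldType) c p x i : @mkpt F c p x (st_var i) = c * p i.
Proof.
rewrite /mkpt; have -> : (st_var i : 'I_(2 + 4)) = lshift 4 i by apply/val_inj.
by rewrite -[lshift 4 i]/(unsplit (inl i)) unsplitK.
Qed.

Lemma mkpt_x (F : fieldType) c p x k : @mkpt F c p x (x_var k) = x k.
Proof.
by rewrite /mkpt /x_var -[rshift 2 k]/(unsplit (inr k)) unsplitK.
Qed.
Lemma dzero (F : fieldType) (P Q : {mpoly F[6]}) l v :
  P.@[v] = 0 -> Q.@[v] = 0 -> ((P * Q)^`M(l)).@[v] = 0.
Proof. by move=> HP HQ; rewrite mderivM mevalD !mevalM HP HQ !mulr0 mul0r addr0. Qed.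

Lemma meval_lift26 (F : fieldType) (q : {mpoly F[2]}) (v : 'I_6 -> F) :
  (lift26 q).@[v] = q.@[fun i => v (st_var i)].
Proof.
rewrite /lift26 /mmap raddf_sum mevalE; apply: eq_bigr => m _.
rewrite -[LHS]/(meval v _) mevalM mevalC /mmap1 rmorph_prod; congr (_ * _).
by apply: eq_bigr => i _; rewrite rmorphXn -[X in X ^+ _]/(meval v _) mevalXU.
Qed.

Lemma meval_homog (F : fieldType) d (q : {mpoly F[2]}) (v : 'I_2 -> F) c :
  q \is d.-homog -> q.@[fun i => c * v i] = c ^+ d * q.@[v].
Proof.
move=> /dhomogP H; rewrite !mevalE mulr_sumr; apply: eq_big_seq => m /H Hm.
rewrite mulrCA; congr (_ * _).
rewrite -Hm. rewrite [X in c ^+ X](mdegE m) (big_morph (fun k => c ^+ k) (exprD c) (expr0 c)).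
rewrite -big_split /=; apply: eq_bigr => i _; exact: exprMn.
Qed.

Lemma pfaff0 (F : fieldType) A : @pfaff F A (inord 0) =
  Pf4 (Amat A) (inord 1) (inord 2) (inord 3) (inord 4).
Proof. by rewrite pfaffE. Qed.
Lemma pfaff1 (F : fieldType) A : @pfaff F A (inord 1) =
  Pf4 (Amat A) (inord 0) (inord 2) (inord 3) (inord 4).
Proof. by rewrite pfaffE. Qed.
Lemma pfaff2 (F : fieldType) A : @pfaff F A (inord 2) =
  Pf4 (Amat A) (inord 0) (inord 1) (inord 3) (inord 4).
Proof. by rewrite pfaffE. Qed.
Lemma pfaff3 (F : fieldType) A : @pfaff F A (inord 3) =
  Pf4 (Amat A) (inord 0) (inord 1) (inord 2) (inord 4).
Proof. by rewrite pfaffE. Qed.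
Lemma pfaff4 (F : fieldType) A : @pfaff F A (inord 4) =
  Pf4 (Amat A) (inord 0) (inord 1) (inord 2) (inord 3).
Proof. by rewrite pfaffE. Qed.

Lemma Pf4_d0 (F : fieldType) (M : 'I_5 -> 'I_5 -> {mpoly F[6]}) a b c d l v :
  M a b = 0 -> (M a c).@[v] = 0 -> (M b d).@[v] = 0 ->
  (M a d).@[v] = 0 -> (M b c).@[v] = 0 -> ((Pf4 M a b c d)^`M(l)).@[v] = 0.
Proof.
move=> H1 H2 H3 H4 H5; rewrite /Pf4 H1 mul0r mderivD mderivB mderiv0 mevalD mevalB meval0.
by rewrite !dzero // subrr addr0.
Qed.

Lemma Pf4_0 (F : fieldType) (M : 'I_5 -> 'I_5 -> {mpoly F[6]}) a b c d v :
  (M a b).@[v] = 0 -> (M a c).@[v] = 0 -> (M a d).@[v] = 0 ->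
  (Pf4 M a b c d).@[v] = 0.
Proof.
by move=> H1 H2 H3; rewrite /Pf4 mevalD mevalB !mevalM H1 H2 H3 !mul0r subrr addr0.
Qed.

Lemma lift26_0 (F : fieldType) : @lift26 F 0 = 0.
Proof.
have H : msupp (0 : {mpoly F[2]}) = [::] by apply/eqP; rewrite msupp_eq0.
by rewrite /lift26 /mmap H big_nil.
Qed.

Lemma part1 (F : fieldType) A (p : 'I_2 -> F) :
  (forall k, A k (inord 0) (inord 1) = 0) ->
  A (inord 0) (inord 0) (inord 2) = 0 ->
  A (inord 0) (inord 0) (inord 3) = 0 ->
  A (inord 0) (inord 0) (inord 4) = 0 ->
  A (inord 0) (inord 1) (inord 2) = 0 ->
  A (inord 0) (inord 1) (inord 3) = 0 ->
  (forall c, (A (inord 0) (inord 1) (inord 4)).@[fun i => c * p i] = 0) ->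
  (p ord0, p ord_max) != (0, 0) -> singular_above A p.
Proof.
move=> H01 Z02 Z03 Z04 Z12 Z13 Z14 Hp.
have [b Hb] : exists b, p b != 0.
  case: (eqVneq (p ord0) 0) => [h0|h0]; last by exists ord0.
  by exists ord_max; apply: contra Hp => /eqP h1; rewrite h0 h1.
pose c := (p b)^-1.
pose x : 'I_4 -> F := fun k => (k == inord 0)%:R.
pose pt := mkpt c p x.
have VE : forall a b', (Amat A a b').@[pt] = (A (inord 0) a b').@[fun i => c * p i].
  move=> a b'; rewrite /Amat (big_morph (meval pt) (mevalD pt) (meval0 pt)).
  rewrite (bigD1 (inord 0)) //= big1 => [|k /negbTE nk].
    rewrite /pt mevalM mevalXU mkpt_x /x eqxx mulr1 addr0 meval_lift26.
    by apply: meval_eq => i; rewrite mkpt_st.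
  by rewrite /pt mevalM mevalXU mkpt_x /x nk mulr0.
have A01 : Amat A (inord 0) (inord 1) = 0.
  by rewrite /Amat big1 // => k _; rewrite H01 lift26_0 mul0r.
have V01 : (Amat A (inord 0) (inord 1)).@[pt] = 0 by rewrite A01 meval0.
have V02 : (Amat A (inord 0) (inord 2)).@[pt] = 0 by rewrite VE Z02 meval0.
have V03 : (Amat A (inord 0) (inord 3)).@[pt] = 0 by rewrite VE Z03 meval0.
have V04 : (Amat A (inord 0) (inord 4)).@[pt] = 0 by rewrite VE Z04 meval0.
have V12 : (Amat A (inord 1) (inord 2)).@[pt] = 0 by rewrite VE Z12 meval0.
have V13 : (Amat A (inord 1) (inord 3)).@[pt] = 0 by rewrite VE Z13 meval0.
have V14 : (Amat A (inord 1) (inord 4)).@[pt] = 0 by rewrite VE Z14.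
have RZ : forall (i : 'I_5) l, (2 <= i)%N -> jac A pt b (inord 0) i l = 0.
  move=> i l; rewrite mxE; case: ifP => // _; move: i.
  apply: ord5_cases => H; first (by exfalso; move: H; rewrite inordK);
    first (by exfalso; move: H; rewrite inordK).
  - by rewrite pfaff2; exact: (@Pf4_d0 _ _ _ _ _ _ l pt A01 V03 V14 V04 V13).
  - by rewrite pfaff3; exact: (@Pf4_d0 _ _ _ _ _ _ l pt A01 V02 V14 V04 V12).
  - by rewrite pfaff4; exact: (@Pf4_d0 _ _ _ _ _ _ l pt A01 V02 V13 V03 V12).
exists c, b, x, (inord 0); split; first by rewrite mulVf.
split; first by rewrite /x eqxx.
split.
  apply: ord5_cases.
  - by rewrite pfaff0; exact: (@Pf4_0 _ _ _ _ _ _ pt V12 V13 V14).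
  - by rewrite pfaff1; exact: (@Pf4_0 _ _ _ _ _ _ pt V02 V03 V04).
  - by rewrite pfaff2; exact: (@Pf4_0 _ _ _ _ _ _ pt V01 V03 V04).
  - by rewrite pfaff3; exact: (@Pf4_0 _ _ _ _ _ _ pt V01 V02 V04).
  - by rewrite pfaff4; exact: (@Pf4_0 _ _ _ _ _ _ pt V01 V02 V03).
rewrite /tangent_dim.
have Hr : (\rank (jac A pt b (inord 0)) <= 2)%N.
  have -> : jac A pt b (inord 0) = pid_mx 2 *m jac A pt b (inord 0).
    apply/matrixP => i l; rewrite [RHS]mxE (bigD1 i) // big1 => [|r nri]; last first.
      rewrite [pid_mx _ _ _]mxE; case: eqP => [/val_inj Eir|_]; last by rewrite andFb mul0r.
      by rewrite Eir eqxx in nri.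
    change (jac A pt b (inord 0) i l = pid_mx 2 i i * jac A pt b (inord 0) i l + 0); rewrite addr0 [pid_mx _ _ _]mxE eqxx andTb; case: ltnP => Hi; first by rewrite mul1r.
    by rewrite mul0r RZ.
  by apply: leq_trans (mxrankM_maxl _ _) _; rewrite rank_pid_mx.
by move: Hr; case: (\rank _) => [|[|[|r]]].
Qed.

Lemma prod2 (R : comNzRingType) (G : 'I_2 -> R) : \prod_i G i = G ord0 * G ord_max.
Proof. by rewrite big_ord_recl big_ord1; congr (_ _ (G _)); apply: val_inj. Qed.

Lemma sum2 (G : 'I_2 -> nat) : (\sum_i G i = G ord0 + G ord_max)%N.
Proof. by rewrite big_ord_recl big_ord1; congr (_ _ (G _)); apply: val_inj. Qed.

Lemma binary_root (F : closedFieldType) n (P : {mpoly F[2]}) :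
  P \is n.-homog -> (0 < n)%N ->
  exists p : 'I_2 -> F, (p ord0, p ord_max) != (0, 0) /\ P.@[p] = 0.
Proof.
move=> Hh Hn.
pose e0 : 'I_2 -> F := fun i => (i == ord0)%:R.
have [He0|He0] := eqVneq (P.@[e0]) 0.
  by exists e0; split => //; rewrite /e0 eqxx xpair_eqE oner_eq0.
pose pv (y : F) : 'I_2 -> F := fun i => if i == ord0 then y else 1.
pose q : {poly F} := \sum_(m <- msupp P) P@_m *: 'X^(m ord0).
have qE : forall y, q.[y] = P.@[pv y].
  move=> y; rewrite mevalE /q horner_sum; apply: eq_bigr => m _.
  by rewrite hornerZ hornerXn prod2 /pv /= expr1n mulr1.
have qn : q`_n = P.@[e0].
  rewrite /q coef_sumMXn mevalE big_mkcond /=; apply: eq_big_seq => m Hm.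
  have := dhomog_mf Hh Hm; rewrite [X in X = _ -> _](mdegE m) sum2 => Hd.
  rewrite prod2 /e0 /= expr1n mul1r expr0n.
  case: (m ord_max) Hd => [|k] Hd.
    by rewrite addn0 in Hd; rewrite Hd eqxx mulr1.
  have -> : (m ord0 == n) = false by apply/negbTE/eqP; lia.
  by rewrite mulr0.
have : size q != 1%N.
  by apply: contra He0 => /eqP Hs; rewrite -qn nth_default // Hs.
case/closed_rootP => y /rootP Hy; exists (pv y); split; last by rewrite -qE.
by rewrite /pv /= xpair_eqE oner_eq0 andbF.
Qed.

Theorem proposition3p3 (F : closedFieldType) (g : nat)
  (e : 'I_4 -> int) (f : 'I_5 -> int)
  (A : 'I_4 -> 'I_5 -> 'I_5 -> {mpoly F[2]}) :
  (forall a b : 'I_4, (a <= b)%N -> e a <= e b) ->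
  (forall a b : 'I_5, (a <= b)%N -> f a <= f b) ->
  \sum_(k < 4) e k = (g + 4)%:Z ->
  \sum_(i < 5) f i = 2 * (g + 4)%:Z ->
  is_section (g + 4)%:Z e f A ->
  dgr (g + 4)%:Z e f (inord 0) (inord 0) (inord 4) < 0 ->
  dgr (g + 4)%:Z e f (inord 0) (inord 1) (inord 3) < 0 ->
  dgr (g + 4)%:Z e f (inord 3) (inord 0) (inord 1) < 0 ->
  (forall p : 'I_2 -> F, (p ord0, p ord_max) != (0, 0) ->
      (A (inord 0) (inord 1) (inord 4)).@[p] = 0 -> singular_above A p)
  /\
  ((forall p : 'I_2 -> F, (p ord0, p ord_max) != (0, 0) -> ~ singular_above A p) ->
      dgr (g + 4)%:Z e f (inord 0) (inord 1) (inord 4) = 0).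
Proof.
move=> Hem Hfm _ _ [S1 [S2 [S3 S4]]] D1 D2 D3.
set N := (g + 4)%:Z.
have fle : forall a b : nat, (a <= b < 5)%N -> f (inord a) <= f (inord b).
  move=> a b /andP [Hab Hb]; apply: Hfm; rewrite !inordK //; exact: leq_ltn_trans Hb.
have H01 : forall k, A k (inord 0) (inord 1) = 0.
  move=> k; apply: S4; move: D3; rewrite /dgr.
  have : e k <= e (inord 3) by apply: Hem; rewrite inordK // -ltnS.
  lia.
have Z0 : forall j : nat, (j <= 4)%N -> A (inord 0) (inord 0) (inord j) = 0.
  move=> j Hj; apply: S4; move: D1; rewrite /dgr.
  have : f (inord j) <= f (inord 4) by apply: fle; rewrite Hj.
  lia.
have Z1 : forall j : nat, (j <= 3)%N -> A (inord 0) (inord 1) (inord j) = 0.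
  move=> j Hj; apply: S4; move: D2; rewrite /dgr.
  have : f (inord j) <= f (inord 3) by apply: fle; rewrite Hj.
  lia.
have P1 : forall p : 'I_2 -> F, (p ord0, p ord_max) != (0, 0) ->
      (A (inord 0) (inord 1) (inord 4)).@[p] = 0 -> singular_above A p.
  move=> p Hp Hv; apply: part1 => //; try (apply: Z0; done); try (apply: Z1; done).
  move=> c; case: (ltrP (dgr N e f (inord 0) (inord 1) (inord 4)) 0) => Hd.
    by rewrite S4 // meval0.
  by rewrite (@meval_homog _ _ _ p c (S3 _ _ _ Hd)) Hv mulr0.
split => // Hns.
apply/eqP; apply: contraT => Hd.
have [p [Hp HP]] : exists p : 'I_2 -> F,
    (p ord0, p ord_max) != (0, 0) /\ (A (inord 0) (inord 1) (inord 4)).@[p] = 0.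
  case: (ltrP (dgr N e f (inord 0) (inord 1) (inord 4)) 0) => Hd'.
    exists (fun i => (i == ord0)%:R); split; last by rewrite S4 // meval0.
    by rewrite eqxx xpair_eqE oner_eq0.
  apply: binary_root (S3 _ _ _ Hd') _.
  by rewrite absz_gt0.
by case: (Hns p Hp (P1 p Hp HP)).
Qed.
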